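(* Let $\mathcal{S}=\langle\mathcal{L},\vdash\rangle$ be a logical structure and $\varrho\subseteq\mathcal{P}(\mathcal{L})\times\mathcal{L}$. (i) $\langle\mathcal{L},\vdash^\varrho\rangle$ and $\langle\mathcal{L},\vdash^{p\varrho}\rangle$ are monotonic. (ii) If $\mathcal{S}$ is monotonic, then $\vdash^\varrho\,\subseteq\,\vdash$ and $\vdash^{p\varrho}\,\subseteq\,\vdash$. (iii) $(\vdash^\varrho)^\varrho\,=\,\vdash^\varrho$ and $(\vdash^{p\varrho})^{p\varrho}\,=\,\vdash^{p\varrho}$.
   Context: A logical structure is a pair $\langle\mathcal{L},\vdash\rangle$ where $\mathcal{L}$ is a set and $\vdash\subseteq\mathcal{P}(\mathcal{L})\times\mathcal{L}$ (no further conditions). It is monotonic if $\Gamma\vdash\alpha$ and $\Gamma\subseteq\Sigma$ imply $\Sigma\vdash\alpha$. For $\varrho\subseteq\mathcal{P}(\mathcal{L})\times\mathcal{L}$, the $\varrho$-companion $\vdash^\varrho$ is defined by: $\Gamma\vdash^\varrho\alpha$ iff there is $\Delta\subseteq\Gamma$ with $(\Delta,\alpha)\in\varrho$ and $\Delta\vdash\alpha$. The pure $\varrho$-companion $\vdash^{p\varrho}$ is defined by: $\Gamma\vdash^{p\varrho}\alpha$ iff there is a nonempty $\Delta\subseteq\Gamma$ with $(\Delta,\alpha)\in\varrho$ and $\Delta\vdash\alpha$. $(\vdash^\varrho)^\varrho$ is the $\varrho$-companion of $\langle\mathcal{L},\vdash^\varrho\rangle$, and similarly for the pure case. *)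

(* Defs.v *)
Definition lset (L : Type) := L -> Prop.
Definition crel (L : Type) := lset L -> L -> Prop.

Definition subset {L : Type} (A B : lset L) : Prop := forall x, A x -> B x.

Definition nonempty {L : Type} (A : lset L) : Prop := exists x, A x.

Definition monotonic {L : Type} (vd : crel L) : Prop :=
  forall (Gamma Sigma : lset L) (a : L), vd Gamma a -> subset Gamma Sigma -> vd Sigma a.

Definition companion {L : Type} (rho vd : crel L) : crel L :=
  fun Gamma a => exists Delta : lset L, subset Delta Gamma /\ rho Delta a /\ vd Delta a.

Definition pcompanion {L : Type} (rho vd : crel L) : crel L :=
  fun Gamma a => exists Delta : lset L,
    nonempty Delta /\ subset Delta Gamma /\ rho Delta a /\ vd Delta a.

Definition rsubset {L : Type} (r s : crel L) : Prop := forall G a, r G a -> s G a.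
Definition requiv {L : Type} (r s : crel L) : Prop := forall G a, r G a <-> s G a.

(* Main.v *)
Require Import Defs.

Theorem theorem3p6 (L : Type) (vd rho : crel L) :
  (monotonic (companion rho vd) /\ monotonic (pcompanion rho vd)) /\
  (monotonic vd -> rsubset (companion rho vd) vd /\ rsubset (pcompanion rho vd) vd) /\
  (requiv (companion rho (companion rho vd)) (companion rho vd) /\
   requiv (pcompanion rho (pcompanion rho vd)) (pcompanion rho vd)).
Proof.
  unfold monotonic, rsubset, requiv, companion, pcompanion, subset.
  split; [split|split].
  - intros G S a [D [H1 [H2 H3]]] HS. exists D. repeat split; auto.
  - intros G S a [D [H0 [H1 [H2 H3]]]] HS. exists D. repeat split; auto.
  - intros Hm. split.
    + intros G a [D [H1 [H2 H3]]]. eapply Hm; eauto.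
    + intros G a [D [H0 [H1 [H2 H3]]]]. eapply Hm; eauto.
  - split.
    + intros G a; split.
      * intros [D [H1 [H2 [D' [H4 [H5 H6]]]]]]. exists D'. repeat split; auto.
      * intros [D [H1 [H2 H3]]]. exists D. repeat split; auto.
        exists D. repeat split; auto.
    + intros G a; split.
      * intros [D [H0 [H1 [H2 [D' [H3 [H4 [H5 H6]]]]]]]]. exists D'. repeat split; auto.
      * intros [D [H0 [H1 [H2 H3]]]]. exists D. repeat split; auto.
        exists D. repeat split; auto.
Qed.
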